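(* Let $G$ be a central product of finite groups $H$ and $K$. Then the $c$-dimension of $G$ is at least the sum of the $c$-dimensions of $H$ and $K$.
   Context: The $c$-dimension of a group $G$ is the maximal length $k$ of a chain of nested centralizers $C_G(Y_0)<C_G(Y_1)<\dots<C_G(Y_k)$ (strict inclusions) of subsets $Y_i\subseteq G$. A group $G$ is a central product of $H$ and $K$ if $G=HK$ where $H,K$ are subgroups of $G$ with $[H,K]=1$ (equivalently, $G$ is a quotient of $H\times K$ by a central subgroup intersecting $H$ and $K$ trivially, and $H,K$ are identified with their images). *)

(* Defs.v *)
From mathcomp Require Import all_boot all_order all_fingroup all_solvable.
Set Implicit Arguments. Unset Strict Implicit. Unset Printing Implicit Defensive.

Local Open Scope group_scope.

Definition centralizers (gT : finGroupType) (G : {set gT}) : {set {set gT}} :=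
  [set 'C_G(Y) | Y in powerset G].

Definition is_cchain (gT : finGroupType) (G : {set gT}) k
    (t : k.+1.-tuple {set gT}) : bool :=
  all (fun A => A \in centralizers G) t &&
  sorted (fun A B : {set gT} => A \proper B) t.

(* A strict chain of
   subsets of G has at most #|G|+1 members, so k <= #|G| and the maximum over
   k < #|G|.+1 is the maximum over all chains (k = 0 always occurs). *)
Definition cdim (gT : finGroupType) (G : {set gT}) : nat :=
  \max_(k < #|G|.+1 | [exists t : k.+1.-tuple {set gT}, is_cchain G t]) k.

(* Main.v *)
Require Import Defs.
From mathcomp Require Import all_boot all_order all_fingroup all_solvable.
Set Implicit Arguments. Unset Strict Implicit. Unset Printing Implicit Defensive.

Local Open Scope group_scope.

Definition prel (gT : finGroupType) := (fun A B : {set gT} => A \proper B).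

Lemma path_card (gT : finGroupType) (x : {set gT}) s :
  path (@prel gT) x s -> (#|x| + size s <= #|last x s|)%N.
Proof.
elim: s x => [|y s IH] x /=; first by rewrite addn0.
case/andP=> lt /IH h; apply: leq_trans h; rewrite addnS -addSn leq_add2r; exact: proper_card.
Qed.

Lemma cent_mem (gT : finGroupType) (G : {group gT}) A :
  A \in centralizers G -> A \subset G.
Proof. by case/imsetP=> Y _ ->; apply: subsetIl. Qed.

Lemma chain_le (gT : finGroupType) (G : {group gT}) x s :
  all (mem (centralizers G)) (x :: s) -> path (@prel gT) x s ->
  (size s <= cdim G)%N.
Proof.
move=> hall hp.
have hs : (size s < #|G|.+1)%N.
  rewrite ltnS; apply: leq_trans (leq_addl #|x| _) _.
  apply: leq_trans (path_card hp) _; apply: subset_leq_card; apply: cent_mem.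
  have : last x s \in x :: s by apply: mem_last.
  by move/(allP hall).
have hsz : size (x :: s) == (size s).+1 by [].
rewrite /cdim.
apply: (@leq_bigmax_cond _ _ (fun k : 'I_#|G|.+1 => nat_of_ord k) (Ordinal hs)).
apply/existsP; exists (Tuple hsz); rewrite /is_cchain /=.
move: hall hp; rewrite /= /prel => -> /= hp; exact: hp.
Qed.

Lemma chain_ex (gT : finGroupType) (G : {group gT}) :
  exists x s, [/\ all (mem (centralizers G)) (x :: s), path (@prel gT) x s
    & size s = cdim G].
Proof.
rewrite /cdim.
set P := (fun k : 'I_#|G|.+1 => [exists t : k.+1.-tuple {set gT}, is_cchain G t]).
have GC : (G : {set gT}) \in centralizers G.
  apply/imsetP; exists set0; first by rewrite inE sub0set.
  by apply/esym/setIidPl; rewrite centsC sub0set.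
have P0 : P ord0.
  apply/existsP; exists [tuple (G : {set gT})]; by rewrite /is_cchain /= GC.
have [i0 Pi0 ->] := @eq_bigmax_cond _ P (fun k : 'I_#|G|.+1 => nat_of_ord k)
  (introT card_gt0P (ex_intro _ ord0 P0)).
case/existsP: Pi0 => t /andP[ha hs].
case: t ha hs => [[|x s] /= sz] // ha hs.
exists x, s; split => //; by case/eqP: sz.
Qed.

Lemma dcent (gT : finGroupType) (H : {group gT}) (A : {set gT}) :
  A \in centralizers H -> 'C_H('C_H(A)) = A.
Proof.
case/imsetP=> X; rewrite inE => sXH ->.
apply/eqP; rewrite eqEsubset; apply/andP; split.
  apply: setIS; apply: centS; rewrite subsetI sXH centsC; exact: subsetIr.
rewrite subsetI subsetIl /= centsC; exact: subsetIr.
Qed.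

Definition fG (gT : finGroupType) (G H K : {group gT}) (A B : {set gT}) :=
  'C_G('C_H(A) :|: 'C_K(B)).

Lemma fG_cent (gT : finGroupType) (G H K : {group gT}) (A B : {set gT}) :
  H \subset G -> K \subset G -> fG G H K A B \in centralizers G.
Proof.
move=> hH hK; apply/imsetP; exists ('C_H(A) :|: 'C_K(B)) => //.
rewrite inE subUset; apply/andP; split.
  exact: subset_trans (subsetIl _ _) hH.
exact: subset_trans (subsetIl _ _) hK.
Qed.

Lemma fG_mono (gT : finGroupType) (G H K : {group gT}) (A B A' B' : {set gT}) :
  A \subset A' -> B \subset B' -> fG G H K A B \subset fG G H K A' B'.
Proof.
move=> sA sB; apply: setIS; apply: centS; apply: setUSS; apply: setIS;
  exact: centS.
Qed.

Lemma fG_H (gT : finGroupType) (G H K : {group gT}) (A B : {set gT}) :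
  H \subset G -> K \subset 'C(H) -> A \in centralizers H ->
  fG G H K A B :&: H = A.
Proof.
move=> hH cHK hA; rewrite -{2}(dcent hA) /fG centU.
have sH : H \subset 'C('C_K(B)).
  rewrite centsC; exact: subset_trans (subsetIl _ _) cHK.
apply/setP => x; rewrite !inE.
case xH: (x \in H); last by rewrite !andbF.
rewrite (subsetP hH _ xH) (subsetP sH _ xH) /=.
by rewrite !andbT.
Qed.

Lemma fG_K (gT : finGroupType) (G H K : {group gT}) (A B : {set gT}) :
  K \subset G -> K \subset 'C(H) -> B \in centralizers K ->
  fG G H K A B :&: K = B.
Proof.
move=> hK cHK hB; rewrite -{2}(dcent hB) /fG centU.
have sK : K \subset 'C('C_H(A)).
  rewrite centsC; rewrite centsC in cHK; exact: subset_trans (subsetIl _ _) cHK.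
apply/setP => x; rewrite !inE.
case xK: (x \in K); last by rewrite !andbF.
by rewrite (subsetP hK _ xK) (subsetP sK _ xK) /= andbT.
Qed.

Theorem lemma4 (gT : finGroupType) (G H K : {group gT}) :
  H \* K = G -> (cdim H + cdim K <= cdim G)%N.
Proof.
case/cprodP=> _ eG cHK.
have hH : H \subset G by rewrite -eG mulG_subl.
have hK : K \subset G by rewrite -eG mulG_subr.
have [xH [sH [aH pH <-]]] := chain_ex H.
have [xK [sK [aK pK <-]]] := chain_ex K.
pose f := fG G H K.
pose aL := last xH sH.
have -> : (size sH + size sK = size ([seq f A xK | A <- sH] ++ [seq f aL B | B <- sK]))%N.
  by rewrite size_cat !size_map.
apply: (@chain_le _ _ (f xH xK)).
  rewrite /= fG_cent // all_cat !all_map; apply/and3P; split => //; apply/allP => y _ /=; exact: fG_cent.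
rewrite cat_path; apply/andP; split.
  have := @path_map _ _ (fun A => f A xK) (@prel gT) xH sH => /= ->.
  apply: (sub_in_path (P := mem (centralizers H))) aH pH.
  move=> A A' hA hA'; rewrite /prel /= !properEneq => /andP[ne sub].
  rewrite fG_mono // andbT; apply: contra ne => /eqP e.
  by rewrite -(fG_H xK hH cHK hA) -(fG_H xK hH cHK hA') -/f e.
rewrite (last_map (fun A => f A xK)) -/aL.
have := @path_map _ _ (fun B => f aL B) (@prel gT) xK sK => /= ->.
apply: (sub_in_path (P := mem (centralizers K))) aK pK.
move=> B B' hB hB'; rewrite /prel /= !properEneq => /andP[ne sub].
rewrite fG_mono // andbT; apply: contra ne => /eqP e.
by rewrite -(fG_K aL hK cHK hB) -(fG_K aL hK cHK hB') -/f e.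
Qed.
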